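(* Let $\lambda,\beta,\epsilon>0$ and $\gamma>0$ with $0<\epsilon<\gamma^2\beta/4$, and let $\|\cdot\|_*$ be the norm defined in the context. (i) There exists $\eta_1>0$ such that for any fluid model $(y,x)$, at any regular point $t$ with $x(t)>-\lambda/\beta$, $\frac{d}{dt}\|(y(t),x(t))\|_*\le-\eta_1\|(y(t),x(t))\|_*$. (ii) There exists $\eta_2>0$ such that for any fluid model, at any regular point $t$ with $x(t)=-\lambda/\beta$ and $y(t)\ge\gamma\lambda/\epsilon$, $\frac{d}{dt}\|(y(t),x(t))\|_*\le-\eta_2$. (iii) There exist $\eta>0$ and $C>0$ such that for any fluid model, at any regular point $t$, $\|(y(t),x(t))\|_*\ge C$ implies $\frac{d}{dt}\|(y(t),x(t))\|_*\le-\eta$.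
   Context: Let $A=\begin{bmatrix}0&-\epsilon\\ \beta&-\gamma\beta\end{bmatrix}$; under $0<\epsilon<\gamma^2\beta/4$, $A$ has two distinct negative eigenvalues $-\nu_2<-\nu_1<0$. Let $v_i=(\beta/\nu_i,-1)$, $i=1,2$ (row vectors with $v_iA=-\nu_iv_i$). For $u\in\mathbb{R}^2$ write $u=\alpha_1v_1+\alpha_2v_2$ and set $\|u\|_*=(\alpha_1^2+\alpha_2^2)^{1/2}$. A fluid model is a locally Lipschitz continuous trajectory $(y(t),x(t))$, $t\ge0$, such that $x(t)\ge-\lambda/\beta$ for all $t$ and, at every regular point $t$: if $x(t)>-\lambda/\beta$ then $y'(t)=\beta x(t)$, $x'(t)=-\gamma\beta x(t)-\epsilon y(t)$; if $x(t)=-\lambda/\beta$ then $y'(t)=-\lambda$, $x'(t)=[\gamma\lambda-\epsilon y(t)]\vee0$. A point $t$ is regular if for every nonempty subset of $\{y,x\}$ the derivatives of the pointwise maximum and minimum over that subset exist at $t$. *)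

(* Defs.v *)
From Stdlib Require Import Reals Lra.
Open Scope R_scope.

(* Row vectors in R^2 are pairs (first, second) = (y, x). *)

(* The matrix A = [[0, -eps], [beta, -gamma*beta]] acting on row vectors from
   the right:  (a, b) A = (a*0 + b*beta, a*(-eps) + b*(-gamma*beta)). *)
Definition rowA (beta eps gamma : R) (w : R * R) : R * R :=
  (fst w * 0 + snd w * beta, fst w * (- eps) + snd w * (- (gamma * beta))).

Definition eigenvalueA (beta eps gamma mu : R) : Prop :=
  exists w : R * R, w <> (0, 0) /\
    rowA beta eps gamma w = (mu * fst w, mu * snd w).

Definition vvec (beta nu : R) : R * R := (beta / nu, -1).

(* Coordinates (alpha1, alpha2) of u in the basis (v1, v2), u = alpha1 v1 + alpha2 v2
   (Cramer's rule). *)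
Definition coords (v1 v2 u : R * R) : R * R :=
  let det := fst v1 * snd v2 - fst v2 * snd v1 in
  ((fst u * snd v2 - snd u * fst v2) / det,
   (fst v1 * snd u - snd v1 * fst u) / det).

Definition norm_star (beta nu1 nu2 : R) (u : R * R) : R :=
  let a := coords (vvec beta nu1) (vvec beta nu2) u in
  sqrt (fst a ^ 2 + snd a ^ 2).

(* f has derivative d at t >= 0, relative to the time domain [0, oo)
   (for t > 0 this is the ordinary two-sided derivative; at t = 0 the
   right derivative). *)
Definition has_deriv0 (f : R -> R) (t d : R) : Prop :=
  0 <= t /\
  forall e, 0 < e -> exists del, 0 < del /\
    forall h, h <> 0 -> 0 <= t + h -> Rabs h < del ->
      Rabs ((f (t + h) - f t) / h - d) < e.

Definition differentiable0 (f : R -> R) (t : R) : Prop :=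
  exists d, has_deriv0 f t d.

(* Regular point: for every nonempty subset of {y, x} the pointwise max and
   min are differentiable at t: subsets {y}, {x}, {y, x}. *)
Definition regular_point (y x : R -> R) (t : R) : Prop :=
  differentiable0 y t /\ differentiable0 x t /\
  differentiable0 (fun s => Rmax (y s) (x s)) t /\
  differentiable0 (fun s => Rmin (y s) (x s)) t.

Definition loc_lipschitz0 (f : R -> R) : Prop :=
  forall T, 0 <= T -> exists L, 0 <= L /\
    forall s t, 0 <= s <= T -> 0 <= t <= T -> Rabs (f s - f t) <= L * Rabs (s - t).

Definition fluid_model (lam beta eps gamma : R) (y x : R -> R) : Prop :=
  loc_lipschitz0 y /\ loc_lipschitz0 x /\
  (forall t, 0 <= t -> x t >= - lam / beta) /\
  (forall t, 0 <= t -> regular_point y x t ->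
     (x t > - lam / beta ->
        has_deriv0 y t (beta * x t) /\
        has_deriv0 x t (- gamma * beta * x t - eps * y t)) /\
     (x t = - lam / beta ->
        has_deriv0 y t (- lam) /\
        has_deriv0 x t (Rmax (gamma * lam - eps * y t) 0))).

(* Main.v *)
Require Import Defs.
From Stdlib Require Import Reals Lra Psatz.
From Coquelicot Require Import Coquelicot.
Open Scope R_scope.

Lemma hd_to_dpl f t d : has_deriv0 f t d ->
  is_derive (fun s => if Rle_dec 0 s then f s else f t + d*(s-t)) t d.
Proof.
  intros [Ht H]. apply is_derive_Reals. intros e He.
  destruct (H e He) as [del [Hd Hh]].
  exists (mkposreal del Hd). intros h Hh0 Hhd. simpl in Hhd.
  destruct (Rle_dec 0 t) as [_|n]; [|lra].
  destruct (Rle_dec 0 (t+h)) as [r|n].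
  - apply Hh; auto.
  - replace ((f t + d * (t + h - t) - f t) / h - d) with 0 by (field; auto).
    rewrite Rabs_R0; lra.
Qed.

Lemma dpl_to_hd G F t D : 0 <= t -> is_derive G t D ->
  (forall s, 0 <= s -> G s = F s) -> has_deriv0 F t D.
Proof.
  intros Ht HG Heq. apply is_derive_Reals in HG. split; auto.
  intros e He. destruct (HG e He) as [del Hd].
  exists del. split; [apply cond_pos|].
  intros h Hh0 Hth Hhd. rewrite <- !Heq by auto. apply Hd; auto.
Qed.

Lemma dpl_to_hd' G F t D D' : 0 <= t -> is_derive G t D' -> D = D' ->
  (forall s, 0 <= s -> G s = F s) -> has_deriv0 F t D.
Proof. intros; subst; eapply dpl_to_hd; eauto. Qed.

Lemma hd_quad p11 p12 p21 p22 y x t dy dx :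
  has_deriv0 y t dy -> has_deriv0 x t dx ->
  0 < (p11*y t+p12*x t)^2 + (p21*y t+p22*x t)^2 ->
  has_deriv0 (fun s => sqrt ((p11*y s+p12*x s)^2 + (p21*y s+p22*x s)^2)) t
   (((p11*y t+p12*x t)*(p11*dy+p12*dx) + (p21*y t+p22*x t)*(p21*dy+p22*dx))
     / sqrt ((p11*y t+p12*x t)^2 + (p21*y t+p22*x t)^2)).
Proof.
  intros Hy Hx Hpos.
  assert (Ht : 0 <= t) by (destruct Hy; auto).
  pose proof (hd_to_dpl _ _ _ Hy) as Y. pose proof (hd_to_dpl _ _ _ Hx) as X.
  set (Yf := fun s => if Rle_dec 0 s then y s else y t + dy*(s-t)) in *.
  set (Xf := fun s => if Rle_dec 0 s then x s else x t + dx*(s-t)) in *.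
  assert (EY : Yf t = y t) by (unfold Yf; destruct (Rle_dec 0 t); lra).
  assert (EX : Xf t = x t) by (unfold Xf; destruct (Rle_dec 0 t); lra).
  assert (L1 : is_derive (fun s => p11*Yf s + p12*Xf s) t (p11*dy+p12*dx)).
  { apply (is_derive_plus (fun s => p11*Yf s) (fun s => p12*Xf s));
    apply is_derive_scal; auto. }
  assert (L2 : is_derive (fun s => p21*Yf s + p22*Xf s) t (p21*dy+p22*dx)).
  { apply (is_derive_plus (fun s => p21*Yf s) (fun s => p22*Xf s));
    apply is_derive_scal; auto. }
  apply is_derive_pow with (n:=2%nat) in L1.
  apply is_derive_pow with (n:=2%nat) in L2.
  pose proof (is_derive_plus _ _ _ _ _ L1 L2) as Q.
  apply is_derive_sqrt in Q.
  2:{ unfold plus; simpl. rewrite EY, EX. simpl in Hpos. lra. }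
  unfold plus in Q; simpl in Q. rewrite EY, EX in Q.
  eapply (dpl_to_hd' _ _ _ _ _ Ht Q).
  - simpl. field. idtac.
    + apply Rgt_not_eq, sqrt_lt_R0. simpl in Hpos; lra.
  - intros s Hs. unfold Yf, Xf. destruct (Rle_dec 0 s); [simpl; f_equal; ring|lra].
Qed.

Lemma hd_quad0 p11 p12 p21 p22 y x t :
  has_deriv0 y t 0 -> has_deriv0 x t 0 -> y t = 0 -> x t = 0 ->
  has_deriv0 (fun s => sqrt ((p11*y s+p12*x s)^2 + (p21*y s+p22*x s)^2)) t 0.
Proof.
  intros [Ht Hy] [_ Hx] Y0 X0. split; auto. intros e He.
  set (K := Rabs p11 + Rabs p12 + Rabs p21 + Rabs p22 + 1).
  assert (HK : 0 < K) by (unfold K; pose proof (Rabs_pos p11); pose proof (Rabs_pos p12);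
     pose proof (Rabs_pos p21); pose proof (Rabs_pos p22); lra).
  assert (He' : 0 < e / (2*K)) by (apply Rdiv_lt_0_compat; lra).
  destruct (Hy _ He') as [d1 [Hd1 H1]]. destruct (Hx _ He') as [d2 [Hd2 H2]].
  exists (Rmin d1 d2). split; [apply Rmin_pos; auto|].
  intros h Hh0 Hth Hhd.
  pose proof (Rmin_l d1 d2). pose proof (Rmin_r d1 d2).
  specialize (H1 h Hh0 Hth ltac:(lra)). specialize (H2 h Hh0 Hth ltac:(lra)).
  rewrite Y0 in H1. rewrite X0 in H2. rewrite Y0, X0.
  replace ((y (t + h) - 0) / h - 0) with (y (t+h) / h) in H1 by (field; auto).
  replace ((x (t + h) - 0) / h - 0) with (x (t+h) / h) in H2 by (field; auto).
  replace (sqrt ((p11 * 0 + p12 * 0) ^ 2 + (p21 * 0 + p22 * 0) ^ 2)) with 0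
    by (replace ((p11 * 0 + p12 * 0) ^ 2 + (p21 * 0 + p22 * 0) ^ 2) with 0 by ring;
        symmetry; apply sqrt_0).
  set (Y := y (t+h)) in *. set (X := x (t+h)) in *.
  set (a := p11*Y+p12*X). set (b := p21*Y+p22*X).
  assert (Hs : sqrt (a^2+b^2) <= Rabs a + Rabs b).
  { rewrite <- (sqrt_Rsqr (Rabs a + Rabs b)) by (pose proof (Rabs_pos a); pose proof (Rabs_pos b); lra).
    apply sqrt_le_1_alt. unfold Rsqr.
    pose proof (Rabs_pos a); pose proof (Rabs_pos b).
    rewrite <- (pow2_abs a), <- (pow2_abs b). nra. }
  assert (Ha : Rabs a <= (Rabs p11 + Rabs p12) * (Rabs Y + Rabs X)).
  { unfold a. eapply Rle_trans; [apply Rabs_triang|]. rewrite !Rabs_mult.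
    pose proof (Rabs_pos p11); pose proof (Rabs_pos p12); pose proof (Rabs_pos Y); pose proof (Rabs_pos X). nra. }
  assert (Hb : Rabs b <= (Rabs p21 + Rabs p22) * (Rabs Y + Rabs X)).
  { unfold b. eapply Rle_trans; [apply Rabs_triang|]. rewrite !Rabs_mult.
    pose proof (Rabs_pos p21); pose proof (Rabs_pos p22); pose proof (Rabs_pos Y); pose proof (Rabs_pos X). nra. }
  unfold Rdiv in H1, H2 |- *. rewrite Rabs_mult in H1, H2.
  replace ((sqrt (a ^ 2 + b ^ 2) - 0) * / h - 0) with (sqrt (a ^ 2 + b ^ 2) * / h) by ring.
  rewrite Rabs_mult. rewrite (Rabs_right (sqrt _)) by (apply Rle_ge, sqrt_pos).
  assert (Hih : 0 < Rabs (/h)) by (apply Rabs_pos_lt, Rinv_neq_0_compat; auto).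
  assert (HKK : Rabs p11 + Rabs p12 + (Rabs p21 + Rabs p22) <= K) by (unfold K; lra).
  assert (e * / (2*K) * K = e/2) by (field; lra).
  pose proof (Rabs_pos a); pose proof (Rabs_pos b); pose proof (Rabs_pos Y); pose proof (Rabs_pos X).
  assert (sqrt (a ^ 2 + b ^ 2) * Rabs (/ h) <= (Rabs a + Rabs b) * Rabs (/h)) by nra.
  assert (Rabs a + Rabs b <= K * (Rabs Y + Rabs X)) by nra.
  assert ((Rabs a + Rabs b) * Rabs (/h) <= K * (Rabs Y * Rabs (/h) + Rabs X * Rabs (/h))).
  { replace (K * (Rabs Y * Rabs (/h) + Rabs X * Rabs (/h))) with (K * (Rabs Y + Rabs X) * Rabs (/h)) by ring.
    apply Rmult_le_compat_r; lra. }
  nra.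
Qed.

Lemma nu_rel beta eps gamma nu : 0 < beta -> eigenvalueA beta eps gamma (- nu) ->
  nu^2 - gamma*beta*nu + eps*beta = 0.
Proof.
  intros Hb [[w1 w2] [Hw Heq]]. unfold rowA in Heq; simpl in Heq.
  injection Heq as E1 E2.
  destruct (Req_dec w1 0) as [Z|NZ].
  - subst. exfalso. apply Hw. f_equal. assert (w2 * beta = 0) by lra.
    apply Rmult_integral in H. destruct H; lra.
  - assert (E3 : w1 * (nu^2 - gamma*beta*nu + eps*beta) = 0).
    { assert (beta*w2 = - nu * w1) by lra.
      replace (w1 * (nu^2 - gamma*beta*nu + eps*beta)) with
        (- beta * (w1 * - eps + w2 * - (gamma * beta) - - nu * w2) + nu * (beta*w2 + nu*w1) - gamma*beta*(beta*w2 + nu*w1)) by ring.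
      rewrite E2. replace (beta*w2 + nu*w1) with 0 by lra. ring. }
    apply Rmult_integral in E3. destruct E3; [contradiction|auto].
Qed.

Lemma hd_ext f g t d : (forall s, f s = g s) -> has_deriv0 f t d -> has_deriv0 g t d.
Proof.
  intros E [Ht H]. split; auto. intros e He. destruct (H e He) as [del [Hd Hh]].
  exists del; split; auto. intros h H1 H2 H3. rewrite <- !E. auto.
Qed.

Definition dtf beta nu1 nu2 := beta/nu1 * -1 - beta/nu2 * -1.

Lemma dt_neg beta nu1 nu2 : 0 < beta -> 0 < nu1 -> nu1 < nu2 -> dtf beta nu1 nu2 < 0.
Proof.
  intros. unfold dtf. assert (beta/nu2 < beta/nu1).
  { apply Rmult_lt_compat_l; auto. apply Rinv_lt_contravar; nra. }
  lra.
Qed.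

Lemma norm_form beta nu1 nu2 a b : 0 < beta -> 0 < nu1 -> nu1 < nu2 ->
  norm_star beta nu1 nu2 (a,b) =
  sqrt (((-1/dtf beta nu1 nu2)*a + (-(beta/nu2)/dtf beta nu1 nu2)*b)^2 +
        ((1/dtf beta nu1 nu2)*a + ((beta/nu1)/dtf beta nu1 nu2)*b)^2).
Proof.
  intros. pose proof (dt_neg _ _ _ H H0 H1). unfold norm_star, coords, vvec; simpl.
  unfold dtf in *. f_equal. field. repeat split; nra.
Qed.

Lemma key_int beta eps gamma nu1 nu2 y x t :
  0 < beta -> 0 < nu1 -> nu1 < nu2 -> gamma*beta = nu1+nu2 -> eps*beta = nu1*nu2 ->
  has_deriv0 y t (beta * x t) -> has_deriv0 x t (- gamma * beta * x t - eps * y t) ->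
  exists D, has_deriv0 (fun s => norm_star beta nu1 nu2 (y s, x s)) t D /\
    D <= - nu1 * norm_star beta nu1 nu2 (y t, x t).
Proof.
  intros Hb H1 H12 Rg Re Hy Hx.
  pose proof (dt_neg _ _ _ Hb H1 H12) as Hdt.
  set (dt := dtf beta nu1 nu2) in *.
  assert (NF : forall s, sqrt (((-1/dt)*y s + (-(beta/nu2)/dt)*x s)^2 +
        ((1/dt)*y s + ((beta/nu1)/dt)*x s)^2) = norm_star beta nu1 nu2 (y s, x s)).
  { intros s. rewrite norm_form by lra. reflexivity. }
  rewrite <- NF.
  set (a1 := (-1/dt)*y t + (-(beta/nu2)/dt)*x t).
  set (a2 := (1/dt)*y t + ((beta/nu1)/dt)*x t).
  assert (Eg : gamma = (nu1+nu2)/beta) by (apply (Rmult_eq_reg_r beta); [|lra]; field_simplify; lra).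
  assert (Ee : eps = (nu1*nu2)/beta) by (apply (Rmult_eq_reg_r beta); [|lra]; field_simplify; lra).
  destruct (Rlt_or_le 0 (a1^2 + a2^2)) as [Hq|Hq].
  - pose proof (hd_quad _ _ _ _ _ _ _ _ _ Hy Hx Hq) as HD.
    eexists; split; [eapply hd_ext; [exact NF|exact HD]|].
    fold a1 a2.
    assert (D1 : (-1/dt)*(beta * x t) + (-(beta/nu2)/dt)*(- gamma * beta * x t - eps * y t) = - nu1 * a1).
    { unfold a1. rewrite Eg, Ee. field. repeat split; nra. }
    assert (D2 : (1/dt)*(beta * x t) + ((beta/nu1)/dt)*(- gamma * beta * x t - eps * y t) = - nu2 * a2).
    { unfold a2. rewrite Eg, Ee. field. repeat split; nra. }
    rewrite D1, D2.
    set (S := sqrt (a1^2+a2^2)).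
    assert (HS : 0 < S) by (apply sqrt_lt_R0; lra).
    assert (HSS : S * S = a1^2+a2^2) by (apply sqrt_sqrt; lra).
    apply (Rmult_le_reg_r S); auto.
    unfold Rdiv. rewrite Rmult_assoc, Rinv_l by lra.
    nra.
  - assert (A1 : a1 = 0) by nra. assert (A2 : a2 = 0) by nra.
    assert (E1 : -y t - beta/nu2 * x t = 0).
    { replace (-y t - beta/nu2 * x t) with (a1 * dt) by (unfold a1; field; repeat split; nra).
      rewrite A1; ring. }
    assert (E2 : y t + beta/nu1 * x t = 0).
    { replace (y t + beta/nu1 * x t) with (a2 * dt) by (unfold a2; field; repeat split; nra).
      rewrite A2; ring. }
    assert (X0 : x t = 0).
    { assert (HH : (beta/nu1 - beta/nu2) * x t = 0) by lra.
      apply Rmult_integral in HH. destruct HH; auto. unfold dt, dtf in Hdt. lra. }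
    assert (Y0 : y t = 0) by (rewrite X0 in E1; lra).
    exists 0. split.
    + eapply hd_ext; [exact NF|]. apply hd_quad0; auto.
      * rewrite X0, Rmult_0_r in Hy. exact Hy.
      * rewrite X0, Y0 in Hx. replace (- gamma * beta * 0 - eps * 0) with 0 in Hx by ring. exact Hx.
    + fold a1 a2. rewrite A1, A2. replace (0^2+0^2) with 0 by ring. rewrite sqrt_0. lra.
Qed.

Lemma key_bd lam beta nu1 nu2 y x t :
  0 < lam -> 0 < beta -> 0 < nu1 -> nu1 < nu2 ->
  has_deriv0 y t (- lam) -> has_deriv0 x t 0 -> x t = - lam / beta ->
  y t >= lam * (1/nu1 + 1/nu2) ->
  exists D, has_deriv0 (fun s => norm_star beta nu1 nu2 (y s, x s)) t D /\
    D <= lam / (2 * dtf beta nu1 nu2).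
Proof.
  intros Hl Hb H1 H12 Hy Hx Xb Yb.
  pose proof (dt_neg _ _ _ Hb H1 H12) as Hdt.
  set (dt := dtf beta nu1 nu2) in *.
  assert (NF : forall s, sqrt (((-1/dt)*y s + (-(beta/nu2)/dt)*x s)^2 +
        ((1/dt)*y s + ((beta/nu1)/dt)*x s)^2) = norm_star beta nu1 nu2 (y s, x s)).
  { intros s. rewrite norm_form by lra. reflexivity. }
  set (a1 := (-1/dt)*y t + (-(beta/nu2)/dt)*x t).
  set (a2 := (1/dt)*y t + ((beta/nu1)/dt)*x t).
  set (Y := y t) in *.
  set (A1 := - Y + lam/nu2). set (A2 := Y - lam/nu1).
  assert (Ea1 : a1 = A1/dt) by (unfold a1, A1; rewrite Xb; field; repeat split; nra).
  assert (Ea2 : a2 = A2/dt) by (unfold a2, A2; rewrite Xb; field; repeat split; nra).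
  assert (L1 : lam/nu2 < lam/nu1) by (apply Rmult_lt_compat_l; auto; apply Rinv_lt_contravar; nra).
  assert (L2 : 0 < lam/nu2) by (apply Rdiv_lt_0_compat; lra).
  assert (Yb' : Y >= lam/nu1 + lam/nu2) by (unfold Rdiv; lra).
  assert (HA1 : -Y < A1 < 0) by (unfold A1; lra).
  assert (HA2 : 0 < A2 < Y) by (unfold A2; lra).
  assert (Hid : / dt < 0) by (apply Rinv_lt_0_compat; auto).
  assert (Hq : 0 < a1^2 + a2^2).
  { rewrite Ea2. assert (A2/dt < 0) by (unfold Rdiv; nra). nra. }
  pose proof (hd_quad _ _ _ _ _ _ _ _ _ Hy Hx Hq) as HD.
  eexists; split; [eapply hd_ext; [exact NF|exact HD]|].
  fold Y. fold a1 a2.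
  set (k := /(dt*dt)).
  assert (Hk : 0 < k) by (unfold k; apply Rinv_0_lt_compat; nra).
  assert (Num : a1 * (-1 / dt * - lam + - (beta / nu2) / dt * 0) +
                a2 * (1 / dt * - lam + beta / nu1 / dt * 0) = lam*(A1 - A2)*k).
  { rewrite Ea1, Ea2. unfold k. field. lra. }
  rewrite Num.
  set (S := sqrt (a1^2+a2^2)).
  assert (HS : 0 < S) by (apply sqrt_lt_R0; lra).
  assert (Sq : a1^2 + a2^2 = (A1^2+A2^2)*k) by (rewrite Ea1, Ea2; unfold k; field; lra).
  assert (HSb : S * (-dt) <= 2 * Y).
  { assert (HS1 : S <= 2*Y*(-dt)*k).
    { unfold S. rewrite <- (sqrt_Rsqr (2*Y*(-dt)*k)) by (apply Rmult_le_pos; [|lra]; nra).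
      apply sqrt_le_1_alt. unfold Rsqr. rewrite Sq.
      replace (2 * Y * - dt * k * (2 * Y * - dt * k)) with (4*Y*Y*k * ((dt*dt)*k)) by ring.
      replace ((dt*dt)*k) with 1 by (unfold k; field; lra).
      assert (A1^2 + A2^2 <= 4*Y*Y) by nra. nra. }
    assert (HS2 : S * (-dt) <= 2*Y*(-dt)*k*(-dt)) by nra.
    replace (2*Y*(-dt)*k*(-dt)) with (2*Y*((dt*dt)*k)) in HS2 by ring.
    replace ((dt*dt)*k) with 1 in HS2 by (unfold k; field; lra). lra. }
  apply (Rmult_le_reg_r S); auto.
  unfold Rdiv at 1. rewrite Rmult_assoc, Rinv_l by lra. rewrite Rmult_1_r.
  replace (lam / (2*dt) * S) with (lam * S * dt / 2 * k) by (unfold k; field; lra).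
  assert (A1 - A2 <= S*dt/2) by (unfold A1, A2 in *; lra).
  assert (0 < lam * k) by nra.
  nra.
Qed.

Theorem lemma2 (lam beta eps gamma nu1 nu2 : R) :
  0 < lam -> 0 < beta -> 0 < eps -> 0 < gamma ->
  eps < gamma ^ 2 * beta / 4 ->
  0 < nu1 -> nu1 < nu2 ->
  eigenvalueA beta eps gamma (- nu1) ->
  eigenvalueA beta eps gamma (- nu2) ->
  (* (i) *)
  (exists eta1, 0 < eta1 /\
     forall y x : R -> R, fluid_model lam beta eps gamma y x ->
     forall t, 0 <= t -> regular_point y x t -> x t > - lam / beta ->
     exists D, has_deriv0 (fun s => norm_star beta nu1 nu2 (y s, x s)) t D /\
       D <= - eta1 * norm_star beta nu1 nu2 (y t, x t)) /\
  (* (ii) *)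
  (exists eta2, 0 < eta2 /\
     forall y x : R -> R, fluid_model lam beta eps gamma y x ->
     forall t, 0 <= t -> regular_point y x t -> x t = - lam / beta ->
     y t >= gamma * lam / eps ->
     exists D, has_deriv0 (fun s => norm_star beta nu1 nu2 (y s, x s)) t D /\
       D <= - eta2) /\
  (* (iii) *)
  (exists eta C, 0 < eta /\ 0 < C /\
     forall y x : R -> R, fluid_model lam beta eps gamma y x ->
     forall t, 0 <= t -> regular_point y x t ->
     norm_star beta nu1 nu2 (y t, x t) >= C ->
     exists D, has_deriv0 (fun s => norm_star beta nu1 nu2 (y s, x s)) t D /\
       D <= - eta).
Proof.
  intros Hl Hb He Hg _ H1 H12 E1 E2.
  pose proof (nu_rel _ _ _ _ Hb E1) as R1.
  pose proof (nu_rel _ _ _ _ Hb E2) as R2.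
  assert (Rg : gamma*beta = nu1+nu2).
  { assert (HH : (nu1 - nu2) * (nu1 + nu2 - gamma*beta) = 0) by (ring_simplify; nra).
    apply Rmult_integral in HH. destruct HH; lra. }
  assert (Re : eps*beta = nu1*nu2) by nra.
  pose proof (dt_neg _ _ _ Hb H1 H12) as Hdt.
  set (dt := dtf beta nu1 nu2) in *.
  assert (Heta2 : 0 < - (lam/(2*dt))).
  { assert (lam / (2*dt) < 0) by (unfold Rdiv; apply Rmult_pos_neg; [lra|apply Rinv_lt_0_compat; lra]). lra. }
  assert (Thr : gamma * lam / eps = lam * (1/nu1 + 1/nu2)).
  { assert (Eg : gamma = (nu1+nu2)/beta) by (apply (Rmult_eq_reg_r beta); [|lra]; field_simplify; lra).
    assert (Ee : eps = (nu1*nu2)/beta) by (apply (Rmult_eq_reg_r beta); [|lra]; field_simplify; lra).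
    rewrite Eg, Ee. field. repeat split; nra. }
  assert (PI : forall y x t, fluid_model lam beta eps gamma y x -> 0 <= t -> regular_point y x t ->
     x t > - lam / beta ->
     exists D, has_deriv0 (fun s => norm_star beta nu1 nu2 (y s, x s)) t D /\
       D <= - nu1 * norm_star beta nu1 nu2 (y t, x t)).
  { intros y x t [_ [_ [_ Hr]]] Ht Hreg Hx.
    destruct (Hr t Ht Hreg) as [Hin _]. destruct (Hin Hx) as [Dy Dx].
    eapply key_int; eauto. }
  assert (PII : forall y x t, fluid_model lam beta eps gamma y x -> 0 <= t -> regular_point y x t ->
     x t = - lam / beta -> y t >= gamma * lam / eps ->
     exists D, has_deriv0 (fun s => norm_star beta nu1 nu2 (y s, x s)) t D /\
       D <= - - (lam/(2*dt))).
  { intros y x t [_ [_ [_ Hr]]] Ht Hreg Hx Hy.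
    destruct (Hr t Ht Hreg) as [_ Hbd]. destruct (Hbd Hx) as [Dy Dx].
    rewrite Rmax_right in Dx.
    2:{ unfold Rge, Rdiv in Hy. assert (eps * y t >= gamma*lam).
        { replace (gamma*lam) with (eps * (gamma*lam*/eps)) by (field; lra). nra. } lra. }
    rewrite Thr in Hy. rewrite Ropp_involutive. eapply key_bd; eauto. }
  split; [|split].
  - exists nu1. split; auto.
  - exists (- (lam/(2*dt))). split; auto.
  - exists (Rmin nu1 (- (lam/(2*dt)))), 1. split; [apply Rmin_pos; lra|]. split; [lra|].
    intros y x Hfm t Ht Hreg HN.
    pose proof (Rmin_l nu1 (- (lam/(2*dt)))). pose proof (Rmin_r nu1 (- (lam/(2*dt)))).
    assert (Hmp : 0 < Rmin nu1 (- (lam/(2*dt)))) by (apply Rmin_pos; lra).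
    destruct Hfm as [L1 [L2 [Hge Hr]]].
    destruct (Rge_gt_or_eq _ _ (Hge t Ht)) as [Hx|Hx].
    + destruct (PI y x t (conj L1 (conj L2 (conj Hge Hr))) Ht Hreg Hx) as [D [HD HDle]].
      exists D. split; auto. nra.
    + destruct (Rle_lt_dec (gamma * lam / eps) (y t)) as [Hy|Hy].
      * destruct (PII y x t (conj L1 (conj L2 (conj Hge Hr))) Ht Hreg Hx (Rle_ge _ _ Hy)) as [D [HD HDle]].
        exists D. split; auto. lra.
      * destruct (Hr t Ht Hreg) as [_ Hbd]. destruct (Hbd Hx) as [Dy Dx].
        assert (Hpos : gamma*lam - eps * y t > 0).
        { unfold Rdiv in Hy. assert (eps * y t < gamma*lam).
          { replace (gamma*lam) with (eps * (gamma*lam*/eps)) by (field; lra). nra. } lra. }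
        rewrite Rmax_left in Dx by lra.
        assert (Ex1 : - lam = beta * x t) by (rewrite Hx; field; lra).
        assert (Ex2 : gamma * lam - eps * y t = - gamma * beta * x t - eps * y t)
          by (rewrite Hx; field; lra).
        rewrite Ex1 in Dy. rewrite Ex2 in Dx.
        destruct (key_int _ _ _ _ _ _ _ _ Hb H1 H12 Rg Re Dy Dx) as [D [HD HDle]].
        exists D. split; auto. nra.
Qed.
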